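(* Let $m>2$ be an odd integer, $n\ge 1$ an integer, and let $M_{2mn}=\langle a,b : a^m=b^{2n}=1,\ bab^{-1}=a^{-1}\rangle$ be the metacyclic group of order $2mn$. Let $\Gamma_{M_{2mn}}$ be its non-commuting graph. Then the spectrum of the distance Laplacian matrix $D^L(\Gamma_{M_{2mn}})$ (eigenvalues counted with multiplicity, multiplicities being added if two of the listed values coincide) consists of: (a) $0$ with multiplicity $1$; (b) $n(2m-1)$ with multiplicity $m$; (c) $2mn$ with multiplicity $m(n-1)$; (d) $(3m-2)n$ with multiplicity $(m-1)n-1$.
   Context: For a finite non-abelian group $G$ with centre $Z(G)$, the non-commuting graph $\Gamma_G$ is the simple undirected graph with vertex set $G\setminus Z(G)$, in which two distinct vertices $u,v$ are adjacent if and only if $uv\ne vu$. For a connected graph $H$, $d_{uv}$ denotes the length of a shortest path between $u$ and $v$; the distance matrix $D(H)$ has $(u,v)$-entry $d_{uv}$. The transmission of a vertex $v$ is $\sum_{u} d_{uv}$, and $Tr(H)$ is the diagonal matrix of vertex transmissions. The distance Laplacian matrix is $D^L(H)=Tr(H)-D(H)$. *)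

(* Defs.v *)
From mathcomp Require Import all_boot all_order all_algebra all_fingroup all_solvable.
Set Implicit Arguments.
Unset Strict Implicit.
Unset Printing Implicit Defensive.
Import GRing.Theory.

(* Graphs are given by a vertex set V : {set T} over a finType T and a
   symmetric relation e on T (edges between vertices of V). *)

Definition nc_rel (gT : finGroupType) : rel gT :=
  fun x y => (x * y)%g != (y * x)%g.

Definition nc_vertices (gT : finGroupType) (G : {group gT}) : {set gT} :=
  (G :\: 'Z(G))%g.

Fixpoint ball (T : finType) (V : {set T}) (e : rel T) (u : T) (k : nat)
  : {set T} :=
  match k with
  | 0 => [set u]
  | k'.+1 => ball V e u k' :|: [set y in V | [exists x in ball V e u k', e x y]]
  end.

(* Graph distance: the least k such that v is within distance k of u
   (paths have length < #|T| when they exist; the graphs here are connected). *)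
Definition gdist (T : finType) (V : {set T}) (e : rel T) (u v : T) : nat :=
  find (fun k => v \in ball V e u k) (iota 0 #|T|).

Definition dist_mx (T : finType) (V : {set T}) (e : rel T) : 'M[int]_(#|V|) :=
  \matrix_(i, j) Posz (gdist V e (enum_val i) (enum_val j)).

Definition trans_mx (T : finType) (V : {set T}) (e : rel T) : 'M[int]_(#|V|) :=
  diag_mx (\row_j (\sum_i dist_mx V e i j)%R).

Definition dist_laplacian (T : finType) (V : {set T}) (e : rel T)
  : 'M[int]_(#|V|) := (trans_mx V e - dist_mx V e)%R.

(* Main.v *)
Require Import Defs.
From mathcomp Require Import all_boot all_order all_algebra all_fingroup all_solvable.
From mathcomp Require Import zify ring lra.
Set Implicit Arguments.
Unset Strict Implicit.
Unset Printing Implicit Defensive.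
Import GRing.Theory Num.Theory.
Local Open Scope ring_scope.

Section Gen.
Variables (T : finType) (V : {set T}) (e : rel T) (r : T -> T) (x0 : T).
Hypothesis hx0 : x0 \in V.
Hypothesis hrx0 : r x0 = x0.
Hypothesis hrV : {in V, forall x, r x \in V}.
Hypothesis hrr : {in V, forall x, r (r x) = r x}.
Hypothesis he : {in V &, forall x y, e x y = (r x != r y)}.
Hypothesis hz : {in V, forall x, exists2 z, z \in V & r z != r x}.
Hypothesis hT : (2 < #|T|)%N.

Definition dd (x y : T) : nat := if x == y then 0 else if r x == r y then 2 else 1.

Lemma ball0E x y : (y \in ball V e x 0) = (y == x).
Proof. by rewrite /= inE. Qed.

Lemma ball1E x y : (y \in ball V e x 1) = (y == x) || (y \in V) && e x y.
Proof.
rewrite /= !inE; congr (_ || _); congr (_ && _).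
apply/existsP/idP => [[z /andP[]]|exy]; first by rewrite inE => /eqP ->.
by exists x; rewrite inE eqxx.
Qed.

Lemma gdistE x y : x \in V -> y \in V -> gdist V e x y = dd x y.
Proof.
move=> xV yV; rewrite /gdist /dd.
have [K hK] : exists K, #|T| = K.+3 by exists (#|T| - 3)%N; lia.
rewrite hK /= ball0E ball1E.
case: (y =P x) => [->|nyx]; first by rewrite eqxx.
rewrite (introF eqP (fun h => nyx (esym h))) yV /= he //.
case: (r x =P r y) => [rxy|] //=.
have -> : y \in ball V e x 2.
  have [z zV rz] := hz xV.
  rewrite /= !inE yV /=; apply/orP; right; apply/existsP; exists z.
  rewrite ball1E zV he // (eq_sym (r x)) rz /= he // -rxy.
  by rewrite orbT.
by [].
Qed.

Local Notation N := #|V|.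
Definition cnt (q : T) : nat := #|[set y in V | r y == q]|.
Definition nq (x : T) : nat := cnt (r x).
Local Notation vx := (@enum_val T (mem V)).

Lemma sum_ind (P : pred T) :
  \sum_(x in V) ((P x)%:R : int) = (#|[set x in V | P x]|)%:R.
Proof.
have -> : \sum_(x in V) ((P x)%:R : int) = \sum_(x in V | P x) 1.
  by rewrite big_mkcondr; apply: eq_bigr => x _; case: (P x).
rewrite (eq_bigl (fun x => x \in [set x in V | P x])) ?sumr_const //.
by move=> x; rewrite inE.
Qed.

Lemma sum_pt (y : T) (F : T -> int) : y \in V ->
  \sum_(x in V) (x == y)%:R * F x = F y.
Proof.
move=> yV; rewrite (bigD1 y) //= eqxx mul1r big1 ?addr0 //.
by move=> x /andP[_ /negbTE ->]; rewrite mul0r.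
Qed.

Lemma sum_pt' (y : T) (F : T -> int) : y \in V ->
  \sum_(x in V) (y == x)%:R * F x = F y.
Proof.
move=> yV; rewrite -(sum_pt F yV); apply: eq_bigr => x _; by rewrite eq_sym.
Qed.

Lemma cnt_nq x : cnt (r x) = nq x. Proof. by []. Qed.

Lemma nq_ge1 x : x \in V -> (0 < nq x)%N.
Proof. by move=> xV; rewrite /nq /cnt card_gt0; apply/set0Pn; exists x; rewrite inE xV eqxx. Qed.

Lemma vxV i : vx i \in V. Proof. exact: enum_valP. Qed.

Lemma dist_mxE i j : dist_mx V e i j = Posz (dd (vx i) (vx j)).
Proof. by rewrite mxE gdistE // vxV. Qed.

Lemma ddZ x y : (dd x y)%:Z = 1 + (r x == r y)%:R - 2 * (x == y)%:R.
Proof.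
rewrite /dd; case: (x =P y) => [->|_]; first by rewrite !eqxx.
by case: (r x == r y).
Qed.

Lemma trans_sum y : y \in V ->
  \sum_(x in V) (dd x y)%:Z = (N + nq y)%:R - 2.
Proof.
move=> yV; under eq_bigr do rewrite ddZ.
rewrite !big_split /= sumr_const sum_ind sumrN -mulr_sumr.
under eq_bigr do rewrite -[(_ == y)%:R]mulr1.
rewrite sum_pt // /nq /cnt.
rewrite natrD -[1 *+ _]mulr_natl mulr1.
ring.
Qed.

Definition Lf (x y : T) : int :=
  (x == y)%:R * (N + nq x)%:R - 1 - (r x == r y)%:R.

Lemma LE i j : dist_laplacian V e i j = Lf (vx i) (vx j).
Proof.
rewrite /dist_laplacian /trans_mx !mxE gdistE ?vxV //.
under eq_bigr do rewrite dist_mxE.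
rewrite -(big_enum_val (fun x => Posz (dd x (vx i)))) /= trans_sum ?vxV //.
rewrite ddZ /Lf -(inj_eq enum_val_inj).
case: (i =P j) => [->|_]; first by rewrite !eqxx /=; ring.
by rewrite /=; ring.
Qed.


Lemma sum_pp x q :
  \sum_(y in V) (r x == r y)%:R * (r y == q)%:R = (r x == q)%:R * (cnt q)%:R :> int.
Proof.
case: (r x =P q) => [<-|nxq].
  rewrite mul1r -[RHS]sum_ind; apply: eq_bigr => y _.
  by rewrite (eq_sym (r y)); case: (r x == r y).
rewrite mul0r big1 // => y _; case: (r y =P q) => [ryq|]; last by rewrite mulr0.
by rewrite ryq (introF eqP nxq) mul0r.
Qed.

Lemma S1 x : x \in V -> \sum_(y in V) Lf x y = 0.
Proof.
move=> xV; rewrite /Lf !sumrB sum_pt' // sumr_const.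
have -> : \sum_(y in V) ((r x == r y)%:R : int) = \sum_(y in V) (r y == r x)%:R.
  by apply: eq_bigr => y _; rewrite eq_sym.
rewrite sum_ind natrD -[1 *+ _]mulr_natl mulr1.
rewrite /nq /cnt; ring.
Qed.

Lemma S2 x q : x \in V ->
  \sum_(y in V) Lf x y * (r y == q)%:R = N%:R * (r x == q)%:R - (cnt q)%:R.
Proof.
move=> xV.
rewrite (eq_bigr (fun y => (x == y)%:R * ((N + nq x)%:R * (r y == q)%:R)
   - (r y == q)%:R - (r x == r y)%:R * (r y == q)%:R)); last first.
  by move=> y _; rewrite /Lf; ring.
rewrite !sumrB sum_pt' // sum_pp sum_ind -/(cnt q).
case: (r x =P q) => [<-|_]; last by rewrite /=; ring.
rewrite /= -/(nq x) natrD; ring.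
Qed.

Lemma S3 x z : z \in V -> \sum_(y in V) Lf x y * (y == z)%:R = Lf x z.
Proof. by move=> zV; under eq_bigr do rewrite mulrC; rewrite sum_pt. Qed.

Definition qa z : int := if z == x0 then 1 else if r z == z then - (nq z)%:R else 0.
Definition qb z : int := if z == x0 then 0 else if r z == z then N%:R else -1.
Definition qc z : int := if z == x0 then 0 else if r z == z then 0 else (nq z)%:R.
Definition Qf y z : int := qa z + qb z * (r y == r z)%:R + qc z * (y == z)%:R.
Definition lam z : int := if z == x0 then 0 else if r z == z then N%:R else (N + nq z)%:R.

Definition Qm : 'M[int]_N := \matrix_(i, j) Qf (vx i) (vx j).
Definition Lam : 'M[int]_N := diag_mx (\row_j lam (vx j)).

Lemma sum_vx (F : T -> int) : \sum_(i < N) F (vx i) = \sum_(x in V) F x.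
Proof. by rewrite (big_enum_val F). Qed.

Lemma LQ : dist_laplacian V e *m Qm = Qm *m Lam.
Proof.
apply/matrixP => i j; rewrite /Lam mul_mx_diag !mxE.
under eq_bigr do rewrite LE mxE.
rewrite (sum_vx (fun y => Lf (vx i) y * Qf y (vx j))).
move: (vx i) (vx j) (vxV i) (vxV j) => x z xV zV.
rewrite /Qf.
under eq_bigr do rewrite mulrDr mulrDr (mulrC (qb z)) (mulrC (qc z)) mulrA mulrA.
rewrite !big_split /= -!mulr_suml S1 // S2 // S3 // -/(nq z).
rewrite /qa /qb /qc /lam /Lf.
case: (z =P x0) => [zx0|nzx0] /=; first by ring.
have nqxz : r x == r z -> nq x = nq z by rewrite /nq => /eqP ->.
case: (r z =P z) => [rz|nrz] /=.
  case: (r x =P r z) => [/eqP/nqxz -> | _] /=; ring.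
case: (x =P z) => [->|nxz]; first by rewrite !eqxx /=; ring.
case: (r x =P r z) => [/eqP/nqxz -> | _] /=; ring.
Qed.


Definition pa x : int := if x == x0 then 1 else 0.
Definition pb x : int := if x == x0 then 0 else if r x == x then (nq x0)%:R else 0.
Definition pc x : int := if x == x0 then 0 else if r x == x then - (nq x)%:R else 0.
Definition pd x : int := if x == x0 then 0 else if r x == x then 0 else 1.
Definition Pf x y : int := pa x + pb x * (r y == r x)%:R + pc x * (r y == r x0)%:R
  + pd x * ((x == y)%:R - (y == r x)%:R).
Definition alp z : int := if z == x0 then N%:R else if r z == z then (N * nq x0 * nq z)%:R
  else (nq z)%:R.
Definition Pm : 'M[int]_N := \matrix_(i, j) Pf (vx i) (vx j).

Lemma sumQ z : z \in V -> \sum_(y in V) Qf y z = qa z * N%:R + qb z * (nq z)%:R + qc z.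
Proof.
move=> zV; rewrite /Qf.
under eq_bigr do rewrite (mulrC (qc z)).
rewrite !big_split /= sum_pt // sumr_const -!mulr_sumr.
rewrite sum_ind -/(cnt (r z)) -/(nq z) -[_ *+ N]mulr_natl; ring.
Qed.

Lemma sumCQ z q : z \in V -> \sum_(y in V) (r y == q)%:R * Qf y z =
  qa z * (cnt q)%:R + qb z * (r z == q)%:R * (cnt q)%:R + qc z * (r z == q)%:R.
Proof.
move=> zV.
rewrite (eq_bigr (fun y => qa z * (r y == q)%:R + qb z * ((r z == r y)%:R * (r y == q)%:R)
   + qc z * ((y == z)%:R * (r y == q)%:R))); last first.
  by move=> y _ /=; rewrite /Qf (eq_sym (r z)); ring.
rewrite !big_split /= -!mulr_sumr sum_ind -/(cnt q) sum_pp.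
rewrite (sum_pt (fun y => ((r y == q)%:R : int))) //; ring.
Qed.

Lemma PQ : Pm *m Qm = diag_mx (\row_j alp (vx j)).
Proof.
apply/matrixP => i j; rewrite !mxE.
under eq_bigr do rewrite !mxE.
rewrite (sum_vx (fun y => Pf (vx i) y * Qf y (vx j))) -(inj_eq enum_val_inj).
move: (vx i) (vx j) (vxV i) (vxV j) => x z xV zV.
rewrite /Pf.
under eq_bigr do rewrite !mulrDl -!mulrA mulrBl.
rewrite !big_split /= -!mulr_sumr sumrB.
rewrite sumQ // !sumCQ // ?hrV //.
rewrite sum_pt' //.
have rxV := hrV xV.
rewrite (eq_bigr (fun y => (r x == y)%:R * Qf y z)); last by move=> y _ /=; rewrite eq_sym.
rewrite sum_pt' // /Qf hrr //.
rewrite /pa /pb /pc /pd /alp /qa /qb /qc hrx0 -/(nq x) -/(nq x0) -/(nq z).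
have nqxz : r x == r z -> nq x = nq z by rewrite /nq => /eqP ->.
case: (x =P x0) => [->|nxx0] /=.
  case: (z =P x0) => [->|nzx0] /=; first by rewrite ?hrx0 !eqxx /= ?mulr1n; ring.
  rewrite (introF eqP (fun h => nzx0 (esym h))).
  by case: (r z =P z) => [rz|nrz] /=; ring.
have cx0 : cnt x0 = nq x0 by rewrite /nq hrx0.
case: (r x =P x) => [rx|nrx] /=.
  have rxx0 : (x0 == x) = false by apply/eqP => h; apply: nxx0.
  case: (z =P x0) => [->|nzx0] /=.
    rewrite hrx0 rx rxx0 (introF eqP nxx0) cx0 /= mulr0n; ring.
  case: (r z =P z) => [rz|nrz] /=.
    have rzx0 : (z == x0) = false by apply/eqP.
    rewrite rz rzx0 rx cx0 /=.
    case: (x =P z) => [<-|nxz]; first by rewrite eqxx /= mulr1n; ring.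
    rewrite ?(introF eqP (fun h => nxz (esym h))) ?(introF eqP nxz) /= mulr0n; ring.
  case: (x =P z) => [xz|nxz]; first by rewrite -xz rx in nrz.
  rewrite rx cx0 /= mulr0n.
  case: (r z =P x) => [rzx|_] /=.
    have -> : nq z = nq x by rewrite /nq rzx rx.
    by rewrite rzx (introF eqP nxx0) /=; ring.
  case: (r z =P x0) => [rzx0|_] /=; last by ring.
  have -> : nq z = nq x0 by rewrite /nq rzx0 hrx0.
  ring.
case: (z =P x0) => [->|nzx0] /=; first by rewrite hrx0 cx0 (introF eqP nxx0) /= mulr0n; ring.
rewrite ?(introF eqP nzx0) ?(introF eqP nxx0) /=.
case: (r z =P z) => [rz|nrz] /=.
  have nxz : (x == z) = false by apply/eqP => xz; apply: nrx; rewrite xz.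
  rewrite nxz /= mulr0n; ring.
have rxz : (r x == z) = false.
  by apply/eqP => rxz; apply: nrz; rewrite -rxz hrr.
rewrite rxz; case: (x =P z) => [<-|_] /=; last by rewrite mulr0n; ring.
rewrite ?(introF eqP nrx) mulr1n; ring.
Qed.



Lemma detQ : \det Qm != 0.
Proof.
have := congr1 determinant PQ; rewrite det_mulmx det_diag => h.
have : \prod_(i < N) (\row_j alp (vx j)) 0 i != 0.
  apply/prodf_neq0 => i _; rewrite mxE /alp.
  have N0 : (0 < N)%N by rewrite card_gt0; apply/set0Pn; exists x0.
  have := nq_ge1 (vxV i); have := nq_ge1 hx0.
  move=> h1 h2.
  case: (vx i == x0); first by rewrite pnatr_eq0 -lt0n.
  case: (r (vx i) == vx i); rewrite pnatr_eq0 -lt0n //.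
  by rewrite !muln_gt0 N0 h1 h2.
by move=> hp; apply: contraNneq hp => dq; rewrite -h dq mulr0.
Qed.

Lemma charL : char_poly (dist_laplacian V e) = \prod_(x in V) ('X - (lam x)%:P).
Proof.
set L := dist_laplacian V e.
have key : char_poly_mx L *m map_mx polyC Qm = map_mx polyC Qm *m char_poly_mx Lam.
  rewrite /char_poly_mx mulmxBl mulmxBr -scalar_mxC -!map_mxM LQ //.
have := congr1 determinant key; rewrite !det_mulmx det_map_mx /= => h.
have dQ : (\det Qm)%:P != 0 :> {poly int} by rewrite polyC_eq0 detQ.
have -> : char_poly L = char_poly Lam.
  by apply: (mulIf dQ); rewrite /char_poly h mulrC.
rewrite char_poly_trig ?diag_mx_is_trig //.
rewrite (big_enum_val (fun x => 'X - (lam x)%:P)) /=.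
by apply: eq_bigr => i _; rewrite /Lam !mxE eqxx mulr1n.
Qed.
End Gen.

Lemma sum_ord_first k (hk : (0 < k)%N) (A B : nat) :
  (\sum_(i < k) (if val i == 0%N then A else B) = A + (k - 1) * B)%N.
Proof.
rewrite -(big_mkord xpredT (fun i => if i == 0%N then A else B)) big_ltn //=.
rewrite (eq_big_nat _ _ (F2 := fun _ => B)) ?sum_nat_const_nat ?subn1 //.
by move=> i /andP[h _]; case: i h.
Qed.

Lemma prod_ord_first (R : comPzRingType) k (hk : (0 < k)%N) (A B : R) :
  (\prod_(i < k) (if val i == 0%N then A else B) = A * B ^+ (k - 1))%R.
Proof.
rewrite -(big_mkord xpredT (fun i => if i == 0%N then A else B)) big_ltn //=.
rewrite (eq_big_nat _ _ (F2 := fun _ => B)) ?prodr_const_nat ?subn1 //.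
by move=> i /andP[h _]; case: i h.
Qed.

Lemma prod_ord_two (R : comPzRingType) k (hk : (1 < k)%N) (A B C : R) :
  (\prod_(i < k) (if val i == 0%N then A else if val i == 1%N then B else C)
   = A * B * C ^+ (k - 2))%R.
Proof.
rewrite -(big_mkord xpredT (fun i => if i == 0%N then A else if i == 1%N then B else C)).
rewrite big_ltn ?(ltn_trans _ hk) //= big_ltn //= mulrA.
rewrite (eq_big_nat _ _ (F2 := fun _ => C)) ?prodr_const_nat ?subn2 //.
by move=> i /andP[h _]; case: i h => // [] [].
Qed.

Lemma sum_ord_eq k (j : 'I_k) (c : nat) : (\sum_(i < k) (i == j) * c = c)%N.
Proof.
rewrite (bigD1 j) //= eqxx mul1n big1 ?addn0 // => i /negbTE ->; by rewrite mul0n.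
Qed.

Section Grp.
Variables (gT : finGroupType) (G : {group gT}) (a b : gT) (m n : nat).
Hypotheses (hm_odd : odd m) (hm : (2 < m)%N) (hn : (1 <= n)%N)
  (hG : G :=: <<[set a; b]>>%g)
  (ha : (a ^+ m)%g = 1%g) (hb : (b ^+ (2 * n))%g = 1%g)
  (hab : (b * a * b^-1)%g = (a^-1)%g)
  (hord : #|G| = (2 * m * n)%N).

Local Open Scope group_scope.

Let c := b ^+ 2.

Lemma bai i : b * a ^+ i = a ^- i * b.
Proof.
have h : b * a ^+ i * b^-1 = a ^- i.
  have e : forall x, b * x * b^-1 = x ^ b^-1 by move=> x; rewrite conjgE invgK mulgA.
  by rewrite e conjXg -e hab expgVn.
by rewrite -h mulgKV.
Qed.

Lemma ba : b * a = a^-1 * b.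
Proof. by have := bai 1; rewrite expg1. Qed.

Lemma baV : b * a^-1 = a * b.
Proof.
have h : a * b * a = b by rewrite -mulgA ba mulgA mulgV mul1g.
by rewrite -{1}h mulgK.
Qed.

Lemma ca i : commute c (a ^+ i).
Proof.
apply: commuteX; rewrite /commute /c expgS expg1.
by rewrite -mulgA ba mulgA baV -mulgA.
Qed.

Lemma cb s : commute c (b ^+ s).
Proof. by apply: commuteX; rewrite /c; apply: commute_sym; apply: commuteX. Qed.

Lemma cc k : commute c (c ^+ k).
Proof. by apply: commuteX. Qed.

Lemma cancel_c (x y w1 w2 : gT) : commute w1 y -> commute w1 w2 -> commute w2 x ->
  (x * w1 * (y * w2) == y * w2 * (x * w1)) = (x * y == y * x).
Proof.
move=> h1 h2 h3.
have -> : x * w1 * (y * w2) = x * y * (w1 * w2) by rewrite -!mulgA (mulgA w1) h1 -!mulgA.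
have -> : y * w2 * (x * w1) = y * x * (w1 * w2).
  by rewrite -!mulgA (mulgA w2) h3 -!mulgA h2.
by rewrite (inj_eq (mulIg _)).
Qed.

Lemma odd1 (z : gT) : z ^+ m = 1 -> z ^+ 2 = 1 -> z = 1.
Proof.
move=> h1 h2.
have e : m.+1 = (2 * (m.+1)./2)%N by rewrite -[LHS]odd_double_half /= hm_odd /= -muln2 mulnC.
have : z ^+ m.+1 = z by rewrite expgS h1 mulg1.
by rewrite e expgM h2 expg1n => <-.
Qed.

Lemma sqV (w : gT) : w ^+ m = 1 -> (w == w^-1) = (w == 1).
Proof.
move=> hw; apply/eqP/eqP => [h|->]; last by rewrite invg1.
apply: odd1 => //; rewrite expg2; apply/eqP.
by rewrite -eq_invg_mul -h.
Qed.

Lemma apm i : (a ^+ i) ^+ m = 1.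
Proof. by rewrite expgAC ha expg1n. Qed.

Definition critg i j (s u : bool) : bool :=
  if s && u then a ^+ i == a ^+ j else if s then a ^+ j == 1
  else if u then a ^+ i == 1 else true.

Lemma comm_half i j : (a ^+ i * (a ^+ j * b) == a ^+ j * b * a ^+ i) = (a ^+ i == 1).
Proof.
rewrite -[a ^+ j * b * a ^+ i]mulgA bai !mulgA (inj_eq (mulIg _)).
rewrite (commuteX2 _ _ (commute_refl a)) (inj_eq (mulgI _)).
by rewrite sqV ?apm.
Qed.

Lemma comm_core i j (s u : bool) :
  (a ^+ i * b ^+ s * (a ^+ j * b ^+ u) == a ^+ j * b ^+ u * (a ^+ i * b ^+ s))
  = critg i j s u.
Proof.
rewrite /critg; case: s; case: u => /=; rewrite ?expg1 ?expg0 ?mulg1.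
- have e1 : forall i j, a ^+ i * b * (a ^+ j * b) = a ^+ i * a ^- j * (b * b).
    by move=> i' j'; rewrite !mulgA -(mulgA _ b) bai !mulgA.
  rewrite !e1 (inj_eq (mulIg _)).
  have -> : a ^+ j * a ^- i = (a ^+ i * a ^- j)^-1 by rewrite invMg invgK.
  rewrite sqV; last first.
    rewrite expgMn; last by apply: commuteV; apply: commuteX2.
    by rewrite apm expgVn apm invg1 mulg1.
  by rewrite -eq_mulgV1.
- by rewrite eq_sym comm_half.
- by rewrite comm_half.
- by apply/eqP; apply: commuteX2.
Qed.


Definition phi (t : ('I_m * 'I_n) * bool) : gT := a ^+ t.1.1 * b ^+ t.2 * c ^+ t.1.2.

Lemma cX k x : commute c x -> commute (c ^+ k) x.
Proof. by move=> h; apply: commute_sym; apply: commuteX; apply: commute_sym. Qed.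

Lemma cab i (s : bool) : commute c (a ^+ i * b ^+ s).
Proof. by apply: commuteM; [apply: ca | apply: cb]. Qed.

Lemma comm_phi t t' : (phi t * phi t' == phi t' * phi t) = critg t.1.1 t'.1.1 t.2 t'.2.
Proof.
rewrite /phi cancel_c ?comm_core //.
- by apply: cX; apply: cab.
- by apply: cX; apply: commute_sym; apply: cX; apply: commute_refl.
- by apply: cX; apply: cab.
Qed.

Lemma aG : a \in G. Proof. by rewrite hG mem_gen // !inE eqxx. Qed.
Lemma bG : b \in G. Proof. by rewrite hG mem_gen // !inE eqxx orbT. Qed.

Lemma phiG t : phi t \in G.
Proof. by rewrite /phi !groupM ?groupX ?aG ?bG. Qed.

Lemma bN : b \in 'N(<[a]>).
Proof.
apply/normP; rewrite -cycleJ conjgE -baV mulKg cycleV //.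
Qed.

Lemma Gsub : G \subset phi @: setT.
Proof.
have sG : G \subset <[a]> * <[b]>.
  rewrite -norm_joinEr ?cycle_subG ?bN // hG gen_subG.
  apply/subsetP => y; rewrite !inE => /orP[]/eqP->.
    by apply: (subsetP (joing_subl _ _)); apply: cycle_id.
  by apply: (subsetP (joing_subr _ _)); apply: cycle_id.
apply/subsetP => x /(subsetP sG) /mulsgP[y z /cycleP[i ->] /cycleP[j ->] ->].
have m0 : (0 < m)%N by lia.
have n0 : (0 < 2 * n)%N by lia.
set j' := (j %% (2 * n))%N.
have hj' : (j' < 2 * n)%N by rewrite ltn_pmod.
have hk : (j'./2 < n)%N.
  by have := odd_double_half j'; rewrite -muln2; lia.
apply/imsetP; exists ((Ordinal (ltn_pmod i m0), Ordinal hk), odd j'); first by rewrite inE.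
rewrite /phi /= /c -expgM expg_mod // -mulgA -expgD mulnC muln2 odd_double_half.
by rewrite expg_mod.
Qed.

Lemma phi_img : phi @: setT = G.
Proof.
apply/eqP; rewrite eqEsubset Gsub andbT.
by apply/subsetP => x /imsetP[t _ ->]; apply: phiG.
Qed.

Lemma phi_inj : injective phi.
Proof.
have h : #|phi @: setT| == #|[set: ('I_m * 'I_n) * bool]|.
  by rewrite phi_img hord cardsT card_prod card_prod !card_ord card_bool; apply/eqP; lia.
move/imset_injP: h => h x y; apply: h; by rewrite inE.
Qed.


Definition o0m : 'I_m := Ordinal (ltn_trans (isT : 0 < 2)%N hm).
Definition o1m : 'I_m := Ordinal (ltn_trans (isT : 1 < 2)%N hm).
Definition o0n : 'I_n := Ordinal hn.

Lemma phi_a (i : 'I_m) : phi ((i, o0n), false) = a ^+ i.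
Proof. by rewrite /phi /= !expg0 !mulg1. Qed.

Lemma apow_eq (i j : 'I_m) : (a ^+ i == a ^+ j) = (i == j).
Proof. by rewrite -!phi_a (inj_eq phi_inj) !xpair_eqE eqxx !andbT. Qed.

Lemma apow1 (i : 'I_m) : (a ^+ i == 1) = (val i == 0%N).
Proof. by rewrite -(expg0 a) -[0%N]/(val o0m) apow_eq. Qed.

Definition crit (t t' : ('I_m * 'I_n) * bool) : bool :=
  if t.2 && t'.2 then t.1.1 == t'.1.1 else if t.2 then val t'.1.1 == 0%N
  else if t'.2 then val t.1.1 == 0%N else true.

Lemma comm_phiE t t' : (phi t * phi t' == phi t' * phi t) = crit t t'.
Proof. by rewrite comm_phi /critg /crit !apow1 apow_eq. Qed.

Lemma phiZ t : (phi t \in 'Z(G)) = ~~ (t.2 || (val t.1.1 != 0%N)).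
Proof.
apply/centerP/idP => [[_ hc]|].
  have h1 := hc _ (phiG ((o1m, o0n), false)).
  have h2 := hc _ (phiG ((o0m, o0n), true)).
  move/eqP: h1; move/eqP: h2; rewrite !comm_phiE /crit /=.
  by case: t.2 => //= h _; rewrite negbK.
move=> ht; split; first exact: phiG.
move=> y; rewrite -phi_img => /imsetP[t' _ ->]; apply/eqP; rewrite comm_phiE /crit.
by move: ht; case: t.2 => //=; rewrite negbK => ->; case: t'.2.
Qed.

Lemma inV t : (phi t \in nc_vertices G) = t.2 || (val t.1.1 != 0%N).
Proof. by rewrite /nc_vertices in_setD phiZ phiG andbT negbK. Qed.


Definition t0 : ('I_m * 'I_n) * bool := ((o1m, o0n), false).
Definition x0 := phi t0.
Definition rcode (t : ('I_m * 'I_n) * bool) := if t.2 then ((t.1.1, o0n), true) else t0.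
Definition rr (x : gT) : gT := if [pick t | phi t == x] is Some t then phi (rcode t) else x.
Definition Vc (t : ('I_m * 'I_n) * bool) := t.2 || (val t.1.1 != 0%N).

Lemma rr_phi t : rr (phi t) = phi (rcode t).
Proof.
rewrite /rr; case: pickP => [t' /eqP /phi_inj -> //|].
by move=> /(_ t); rewrite eqxx.
Qed.

Lemma Vphi x : x \in nc_vertices G -> exists2 t, x = phi t & Vc t.
Proof.
move=> xV; have : x \in G by move: xV; rewrite /nc_vertices in_setD => /andP[].
rewrite -phi_img => /imsetP[t _ xt]; exists t => //.
by rewrite /Vc -inV -xt.
Qed.

Lemma hx0 : x0 \in nc_vertices G. Proof. by rewrite /x0 inV. Qed.
Lemma hrx0 : rr x0 = x0. Proof. by rewrite /x0 rr_phi. Qed.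
Lemma hrV : {in nc_vertices G, forall x, rr x \in nc_vertices G}.
Proof. by move=> x /Vphi[t -> _]; rewrite rr_phi inV /rcode; case: t.2. Qed.
Lemma hrr : {in nc_vertices G, forall x, rr (rr x) = rr x}.
Proof. by move=> x /Vphi[t -> _]; rewrite !rr_phi /rcode; case: t.2. Qed.
Lemma he : {in nc_vertices G &, forall x y, nc_rel x y = (rr x != rr y)}.
Proof.
move=> x y /Vphi[t -> vt] /Vphi[t' -> vt']; rewrite /nc_rel comm_phiE !rr_phi.
rewrite (inj_eq phi_inj) /crit /rcode; move: vt vt'; rewrite /Vc /t0.
case: t.2; case: t'.2 => //= h1 h2.
- by rewrite !xpair_eqE !eqxx !andbT.
- by rewrite h2 !xpair_eqE andbF.
- by rewrite h1 !xpair_eqE andbF.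
Qed.
Lemma hz : {in nc_vertices G, forall x, exists2 z, z \in nc_vertices G & rr z != rr x}.
Proof.
move=> x /Vphi[t -> vt]; rewrite rr_phi /rcode.
case: t.2.
  exists x0; first exact: hx0.
  by rewrite hrx0 /x0 (inj_eq phi_inj) /t0 !xpair_eqE andbF.
exists (phi ((o0m, o0n), true)); first by rewrite inV.
by rewrite rr_phi /rcode /= (inj_eq phi_inj) /t0; apply/eqP; case.
Qed.
Lemma hT : (2 < #|gT|)%N.
Proof. by apply: leq_trans (max_card (mem G)); rewrite hord; lia. Qed.


Local Notation D := (('I_m * 'I_n) * bool)%type.

Lemma trip_eq (i i' : 'I_m) (k k' : 'I_n) (s s' : bool) :
  (((i, k), s) == ((i', k'), s')) = [&& i == i', k == k' & s == s'].
Proof.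
apply/eqP/and3P => [[-> -> ->]|[/eqP-> /eqP-> /eqP->]] //; by rewrite !eqxx.
Qed.

Lemma big_trip (R : Type) (idx : R) (op : Monoid.com_law idx) (F : D -> R) :
  \big[op/idx]_(t : D) F t = \big[op/idx]_(i < m) \big[op/idx]_(k < n) op (F ((i, k), true)) (F ((i, k), false)).
Proof.
have e1 : \big[op/idx]_(t : D) F t = \big[op/idx]_(p : 'I_m * 'I_n) \big[op/idx]_(s : bool) F (p, s).
  by rewrite pair_big; apply: eq_big => // -[p s].
have e2 : forall G : 'I_m * 'I_n -> R, \big[op/idx]_(p : 'I_m * 'I_n) G p =
    \big[op/idx]_(i < m) \big[op/idx]_(k < n) G (i, k).
  by move=> G0; rewrite pair_big; apply: eq_big => // -[p s].
rewrite e1 e2; apply: eq_bigr => i _; apply: eq_bigr => k _.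
by rewrite big_bool.
Qed.

Lemma card_trip (P : pred D) :
  #|[set t | P t]| = (\sum_(i < m) \sum_(k < n) (P ((i,k),true) + P ((i,k),false)))%N.
Proof.
rewrite cardsE -sum1_card big_mkcond /= big_trip.
by apply: eq_bigr => i _; apply: eq_bigr => k _; rewrite !unfold_in; case: (P _); case: (P _).
Qed.


Lemma Vimg : nc_vertices G = phi @: [set t | Vc t].
Proof.
apply/setP => x; apply/idP/imsetP => [/Vphi[t -> vt]|[t]].
  by exists t; rewrite ?inE.
by rewrite inE => vt ->; rewrite inV.
Qed.

Lemma cardV : #|nc_vertices G| = (n * (2 * m - 1))%N.
Proof.
rewrite Vimg card_imset; last exact: phi_inj.
rewrite card_trip /Vc /=.
rewrite (eq_bigr (fun i : 'I_m => if val i == 0%N then n else (2 * n)%N)).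
  by rewrite sum_ord_first; [nia | lia].
move=> i _; rewrite (eq_bigr (fun _ => if val i == 0%N then 1%N else 2%N)).
  by rewrite sum_nat_const card_ord; case: (val i == 0%N); lia.
by move=> k _; case: (val i == 0%N).
Qed.

Lemma nq_phi t : Vc t -> nq (nc_vertices G) rr (phi t) = if t.2 then n else ((m - 1) * n)%N.
Proof.
move=> vt; rewrite /nq /cnt rr_phi.
have -> : [set y in nc_vertices G | rr y == phi (rcode t)] =
    phi @: [set t' | Vc t' && (rcode t' == rcode t)].
  apply/setP => y; rewrite inE; apply/andP/imsetP => [[/Vphi[t' -> vt'] h]|[t']].
    by exists t'; rewrite // inE vt' /=; rewrite rr_phi (inj_eq phi_inj) in h.
  rewrite inE => /andP[vt' h] ->; split; first by rewrite inV.
  by rewrite rr_phi (inj_eq phi_inj).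
rewrite card_imset; last exact: phi_inj.
rewrite card_trip /Vc /rcode.
move: t vt => [[ti tk] ts] /= _.
case: ts => /=.
  rewrite (eq_bigr (fun i : 'I_m => ((i == ti) * n)%N)) ?sum_ord_eq //.
  move=> i _; rewrite (eq_bigr (fun _ => (i == ti : nat))) ?sum_nat_const ?card_ord 1?mulnC //.
  move=> k _ /=; rewrite (trip_eq i ti o0n o0n true true) /t0 (trip_eq o1m ti o0n o0n false true).
  by rewrite !eqxx /= !andbF andbT addn0.
rewrite (eq_bigr (fun i : 'I_m => if val i == 0%N then 0%N else n)).
  by rewrite sum_ord_first; lia.
move=> i _; rewrite (eq_bigr (fun _ => if val i == 0%N then 0%N else 1%N)).
  by rewrite sum_nat_const card_ord; case: (val i == 0%N); lia.
move=> k _ /=; rewrite /t0 eqxx andbT (trip_eq i o1m o0n o0n true false) /= andbF.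
by case: (val i == 0%N).
Qed.


Local Close Scope group_scope.
Local Open Scope ring_scope.

Lemma lam_phi t : Vc t -> lam (nc_vertices G) rr x0 (phi t) =
  if t == t0 then 0 else if rcode t == t then (#|nc_vertices G|)%:R
  else (#|nc_vertices G| + (if t.2 then n else ((m - 1) * n)%N))%:R.
Proof.
move=> vt; rewrite /lam /x0 (inj_eq phi_inj) rr_phi (inj_eq phi_inj).
by rewrite nq_phi.
Qed.

Lemma final : char_poly (dist_laplacian (nc_vertices G) (@nc_rel gT)) =
    'X
    * ('X - ((n * (2 * m - 1))%N)%:R%:P) ^+ m
    * ('X - ((2 * m * n)%N)%:R%:P) ^+ (m * (n - 1))
    * ('X - (((3 * m - 2) * n)%N)%:R%:P) ^+ ((m - 1) * n - 1).
Proof.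
rewrite (charL hx0 hrx0 hrV hrr he hz hT).
set L := lam _ _ _.
rewrite Vimg big_imset /=; last by move=> x y _ _; apply: phi_inj.
rewrite (eq_bigr (fun t => 'X - (if t == t0 then 0 else if rcode t == t then (#|nc_vertices G|)%:R
  else (#|nc_vertices G| + (if t.2 then n else ((m - 1) * n)%N))%:R)%:P)); last first.
  by move=> t; rewrite inE => vt; rewrite /L lam_phi.
rewrite cardV big_mkcond /= big_trip.
set N := (n * (2 * m - 1))%N.
have e2 : (N + n = 2 * m * n)%N by rewrite /N; nia.
have e3 : (N + (m - 1) * n = (3 * m - 2) * n)%N by rewrite /N; nia.
set cN := 'X - (N%:R)%:P.
set c2 := 'X - ((2 * m * n)%N%:R)%:P.
set c3 := 'X - (((3 * m - 2) * n)%N%:R)%:P.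
have vo : forall (x : 'I_n), (o0n == x) = (val x == 0%N) by move=> x; rewrite -val_eqE eq_sym.
have vo1 : forall (x : 'I_m), (x == o1m) = (val x == 1%N) by move=> x; rewrite -val_eqE.
rewrite (eq_bigr (fun i : 'I_m => \prod_(k < n) ((if val k == 0%N then cN else c2) *
   (if val i == 0%N then 1 else if val i == 1%N then (if val k == 0%N then 'X else c3) else c3)))); last first.
  move=> i _; apply: eq_bigr => k _.
  rewrite !inE /Vc /= (trip_eq i o1m k o0n true false) andbF /=.
  rewrite (trip_eq i i o0n k true true) vo eqxx andbT e2.
  congr (_ * _).
    by rewrite andbF /=; case: (val k == 0%N).
  rewrite /rcode /=.
  case hi: (val i == 0%N) => //=.
  have -> : (i, k, false) == t0 = (val i == 1%N) && (val k == 0%N).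
    by rewrite /t0 (trip_eq i o1m k o0n false false) vo1 (eq_sym k) vo eqxx andbT.
  have -> : t0 == (i, k, false) = (val i == 1%N) && (val k == 0%N).
    by rewrite /t0 (trip_eq o1m i o0n k false false) vo (eq_sym o1m) vo1 eqxx andbT.
  case: (val i == 1%N); case: (val k == 0%N) => //=; by rewrite ?e3 ?subr0.
rewrite (eq_bigr (fun i : 'I_m => (cN * c2 ^+ (n - 1)) * (if val i == 0%N then 1
   else if val i == 1%N then 'X * c3 ^+ (n - 1) else c3 ^+ n))); last first.
  move=> i _; rewrite big_split /= prod_ord_first //; congr (_ * _).
  case: (val i == 0%N); first by rewrite big1_eq.
  case: (val i == 1%N); first by rewrite prod_ord_first.
  by rewrite prodr_const card_ord.
rewrite big_split /= prodr_const card_ord prod_ord_two; last by lia.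
rewrite mul1r exprMn -!exprM.
have E : c3 ^+ ((m - 1) * n - 1) = c3 ^+ (n - 1) * c3 ^+ (n * (m - 2)).
  by rewrite -exprD; congr (_ ^+ _); nia.
rewrite E (mulnC (n - 1)%N).
set u := cN ^+ m; set v := c2 ^+ _; set w1 := c3 ^+ (n - 1); set w2 := c3 ^+ (n * (m - 2)).
ring.
Qed.



End Grp.

Theorem theorem6p3 (gT : finGroupType) (G : {group gT}) (a b : gT)
  (m n : nat) (hm_odd : odd m) (hm : (2 < m)%N) (hn : (1 <= n)%N)
  (hG : G :=: <<[set a; b]>>%g)
  (ha : (a ^+ m)%g = 1%g) (hb : (b ^+ (2 * n))%g = 1%g)
  (hab : (b * a * b^-1)%g = (a^-1)%g)
  (hord : #|G| = (2 * m * n)%N) :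
  char_poly (dist_laplacian (nc_vertices G) (@nc_rel gT)) =
    'X
    * ('X - ((n * (2 * m - 1))%N)%:R%:P) ^+ m
    * ('X - ((2 * m * n)%N)%:R%:P) ^+ (m * (n - 1))
    * ('X - (((3 * m - 2) * n)%N)%:R%:P) ^+ ((m - 1) * n - 1).
Proof. exact: (final hm_odd hm hn hG ha hb hab hord). Qed.
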